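(* Let $X$ be a compact metric space and $F\colon X\to 2^X$ a set-valued mapping. The set of $F$-invariant Borel probability measures whose support is all of $X$ is either empty or a dense $G_\delta$ subset of the space of $F$-invariant Borel probability measures on $X$ (with the weak$^*$ topology).
   Context: $2^X$ is the space of nonempty closed subsets of $X$; a set-valued mapping is an upper semicontinuous $F\colon X\to 2^X$; $F^{-1}(B)=\{y\in X: F(y)\cap B\neq\emptyset\}$ for $B\subset X$. A Borel probability measure $\mu$ on $X$ is $F$-invariant if $\mu(B)\le\mu(F^{-1}(B))$ for every Borel set $B\subset X$. The support of $\mu$ is all of $X$ (full support) if $\mu(U)>0$ for every nonempty open $U\subset X$. *)

(* Defs.v *)
From HB Require Import structures.
From mathcomp Require Import all_boot all_order all_algebra.
From mathcomp Require Import all_classical all_reals all_analysis.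
Set Implicit Arguments. Unset Strict Implicit. Unset Printing Implicit Defensive.
Import Order.TTheory GRing.Theory Num.Theory.
Import numFieldNormedType.Exports.
Local Open Scope classical_set_scope.
Local Open Scope ring_scope.

(* Pointed metric spaces (measurable types in MathComp-Analysis must be
   pointed, i.e. nonempty). *)
#[short(type="pmetricType")]
HB.structure Definition PMetric (K : numDomainType) :=
  { M of Pointed M & Metric K M }.

Section Defs.
Context {R : realType} (X : pmetricType R).

Definition borelX : Type := g_sigma_algebraType (@open X).

Definition probX : Type := probability borelX R.

Definition set_valued_mapping (F : X -> set X) : Prop :=
  (forall x, F x !=set0 /\ closed (F x)) /\
  (forall U : set X, open U -> open [set x | F x `<=` U]).

Definition Fpre (F : X -> set X) (B : set X) : set X :=
  [set y | F y `&` B !=set0].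

(* outer measure of an arbitrary set (= value of the completion of mu on
   mu-measurable sets, = mu A on Borel sets A) *)
Definition outer (mu : probX) (A : set X) : \bar R :=
  ereal_inf [set mu C | C in [set C : set borelX | measurable C /\ A `<=` C]].

Definition F_invariant (F : X -> set X) (mu : probX) : Prop :=
  forall B : set borelX, measurable B -> (mu B <= outer mu (Fpre F B))%E.

Definition full_support (mu : probX) : Prop :=
  forall U : set X, open U -> U !=set0 -> (0 < mu U)%E.

Definition weak_open (S : set probX) : Prop :=
  forall mu, S mu -> exists (n : nat) (f : 'I_n -> X -> R) (e : R),
    [/\ 0 < e, (forall i, continuous (f i)) &
      [set nu : probX | forall i, (`| \int[nu]_x (f i x)%:E
                                      - \int[mu]_x (f i x)%:E | < e%:E)%E]
        `<=` S].

(* relative notions inside a subspace M of the space of probability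
   measures (with the subspace weak-* topology) *)
Definition Gdelta_in (M A : set probX) : Prop :=
  exists U : nat -> set probX, (forall n, weak_open (U n)) /\
    A = M `&` \bigcap_n U n.

Definition dense_in (M A : set probX) : Prop :=
  A `<=` M /\
  forall U : set probX, weak_open U -> U `&` M !=set0 -> U `&` A !=set0.

End Defs.

(* Main.v *)
Require Import Defs.
From HB Require Import structures.
From mathcomp Require Import all_boot all_order all_algebra.
From mathcomp Require Import all_classical all_reals all_analysis.
From mathcomp Require Import measurable_realfun.
From mathcomp Require Import ring lra.
Set Implicit Arguments. Unset Strict Implicit. Unset Printing Implicit Defensive.
Import Order.TTheory GRing.Theory Num.Theory.
Import numFieldNormedType.Exports.
Local Open Scope classical_set_scope.
Local Open Scope ring_scope.

Section S.
Context {R : realType} (X : pmetricType R).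

Lemma open_mes (U : set X) : open U -> measurable (U : set (borelX X)).
Proof. by move=> oU; apply: sub_sigma_algebra. Qed.

Lemma cont_mfun (f : X -> R) : continuous f -> measurable_fun [set: borelX X] f.
Proof.
move=> /continuousP cf; apply: (measurability _ (measurable_realfun.RGenOpens.measurableE R)).
move=> _ [_ [a [b ->] <-]]; rewrite setTI; apply: open_mes.
exact/cf/interval_open.
Qed.

Lemma cont_bnd (f : X -> R) : compact [set: X] -> continuous f ->
  [bounded f x | x in [set: X]].
Proof.
move=> cX cf.
have := @continuous_compact X R^o f setT (continuous_subspaceT cf) cX.
move=> /(@compact_bounded R R^o); rewrite /bounded_near => /= H; near=> M => x _; apply: (near H M) => //; by exists x.
Unshelve. all: by end_near. Qed.

Lemma cont_int (mu : probX X) (f : X -> R) : compact [set: X] -> continuous f ->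
  mu.-integrable [set: borelX X] (EFin \o f).
Proof.
move=> cX cf; apply: measurable_bounded_integrable => //.
- by apply: (@le_lt_trans _ _ 1%E); [exact: probability_le1|exact: ltry].
- exact: cont_mfun.
- exact: cont_bnd.
Qed.

Section mix.
Variables (t : R) (t0 : 0 <= t) (t1 : t <= 1) (P Q : probX X).
Let p : {nonneg R} := NngNum (ltac:(by rewrite subr_ge0) : 0 <= 1 - t).
Let q : {nonneg R} := NngNum t0.
Definition mix := measure_add (mscale p P) (mscale q Q).
HB.instance Definition _ := Measure.on mix.
Lemma mixE A : mix A = ((1 - t)%:E * P A + t%:E * Q A)%E.
Proof. by rewrite /mix measure_addE. Qed.
Let mix1 : mix setT = 1%E.
Proof.
rewrite mixE !probability_setT !mule1 -EFinD subrK //.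
Qed.
HB.instance Definition _ := Measure_isProbability.Build _ _ _ mix mix1.
Definition mixp : probX X := mix.
Local Open Scope ereal_scope.
Lemma mixpE A : mixp A = (1 - t)%:E * P A + t%:E * Q A.
Proof. exact: mixE. Qed.
Lemma mix_int_ge0 (g : borelX X -> \bar R) : measurable_fun [set: borelX X] g ->
  (forall x, 0 <= g x) ->
  \int[mixp]_x g x = (1-t)%:E * \int[P]_x g x + t%:E * \int[Q]_x g x.
Proof.
move=> mg g0.
rewrite /mixp /mix ge0_integral_measure_add //.
by rewrite !ge0_integral_mscale.
Qed.

Lemma mix_int (f : X -> R) : compact [set: X] -> continuous f ->
  \int[mixp]_x (f x)%:E = ((1 - t) * fine (\int[P]_x (f x)%:E)
                          + t * fine (\int[Q]_x (f x)%:E))%:E.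
Proof.
move=> cX cf.
have iP := cont_int P cX cf; have iQ := cont_int Q cX cf.
have mf : measurable_fun [set: borelX X] (EFin \o f).
  by apply/measurable_EFinP; exact: cont_mfun.
rewrite integralE (integralE P) (integralE Q).
rewrite (mix_int_ge0 (measurable_funepos mf)) //.
rewrite (mix_int_ge0 (measurable_funeneg mf)) //.
have := integrable_pos_fin_num measurableT iP; have := integrable_neg_fin_num measurableT iP.
have := integrable_pos_fin_num measurableT iQ; have := integrable_neg_fin_num measurableT iQ.
set a := \int[P]_x _; set b := \int[P]_x _.
set c := \int[Q]_x _; set e := \int[Q]_x _.
move=> /fineK <- /fineK <- /fineK <- /fineK <-.
rewrite -!EFinM -!EFinD /=.
congr EFin; ring.
Qed.

Lemma outer_mix S : (1 - t)%:E * outer P S + t%:E * outer Q S <= outer mixp S.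
Proof.
apply: le_ereal_inf_tmp => _ [C [mC SC] <-].
rewrite mixpE; apply: leeD; apply: lee_wpmul2l.
- by rewrite lee_fin subr_ge0.
- by apply: ereal_inf_lbound; exists C.
- by rewrite lee_fin.
- by apply: ereal_inf_lbound; exists C.
Qed.

Lemma mix_inv (F : X -> set X) : F_invariant F P -> F_invariant F Q ->
  F_invariant F mixp.
Proof.
move=> iP iQ B mB; apply: le_trans (outer_mix _).
rewrite mixpE; apply: leeD; apply: lee_wpmul2l.
- by rewrite lee_fin subr_ge0.
- exact: iP.
- by rewrite lee_fin.
- exact: iQ.
Qed.

Lemma mix_full : (0 < t)%R -> full_support Q -> full_support mixp.
Proof.
move=> tp fQ U oU U0; rewrite mixpE.
apply: lte_paddl.
  by rewrite mule_ge0 // lee_fin subr_ge0.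
by rewrite mule_gt0 // ?lte_fin //; exact: fQ.
Qed.
End mix.

Lemma lip_cont (f : X -> R) : (forall x y, `|f x - f y| <= mdist x y) -> continuous f.
Proof.
move=> lf x; apply/cvgrPdist_lt => e e0.
have : nbhs x (ball x e) by exact: nbhsx_ballx.
apply: filterS => y; rewrite ballEmdist /= => hy.
exact: le_lt_trans (lf x y) hy.
Qed.

Definition bump (c : X) (r : R) (x : X) : R := Order.max (r - mdist c x) 0.

Lemma max0_lip (a b : R) : `|Order.max a 0 - Order.max b 0| <= `|a - b|.
Proof.
case: (leP a 0) => ha; case: (leP b 0) => hb.
- by rewrite subrr normr0.
- rewrite sub0r normrN (gtr0_norm hb) ler_normr; apply/orP; right; lra.
- rewrite subr0 (gtr0_norm ha) ler_normr; apply/orP; left; lra.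
- by [].
Qed.

Lemma bump_cont c r : continuous (bump c r).
Proof.
apply: lip_cont => x y; apply: le_trans (max0_lip _ _) _.
have h1 := metric_triangle c x y; have h2 := metric_triangle c y x.
have h3 := metric_sym x y.
have e : forall u v w : R, (u - v) - (u - w) = w - v by move=> u v w; ring. rewrite e.
rewrite ler_norml; apply/andP; split; lra.
Qed.

Lemma bump_ge0 c r x : 0 <= bump c r x.
Proof. by rewrite /bump le_max lexx orbT. Qed.

Lemma bump_pos c r x : (0 < bump c r x) = (mdist c x < r).
Proof.
rewrite /bump lt_max ltxx orbF subr_gt0 //.
Qed.

Lemma ball_bump c r : ball c r = [set x | 0 < bump c r x].
Proof. by rewrite ballEmdist; apply/seteqP; split => x /=; rewrite bump_pos. Qed.

Lemma ball_open' (c : X) r : open (ball c r).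
Proof.
rewrite ball_bump; have := proj1 (continuousP (bump c r)) (@bump_cont c r).
move=> H; apply: (H [set z : R | 0 < z]); exact: (@open_gt R 0).
Qed.

Local Open Scope ereal_scope.
Lemma int_bump (mu : probX X) c r :
  (0 < \int[mu]_x (bump c r x)%:E) <-> (0 < mu (ball c r)).
Proof.
have mb : measurable_fun [set: borelX X] (EFin \o bump c r).
  by apply/measurable_EFinP; apply: cont_mfun; exact: bump_cont.
have mB : measurable (ball c r : set (borelX X)).
  by apply: open_mes; exact: ball_open'.
have eqabs : \int[mu]_x (bump c r x)%:E = \int[mu]_x `|(EFin \o bump c r) x|.
  by apply: eq_integral => x _ /=; rewrite ger0_norm // bump_ge0.
rewrite eqabs; split.
- move=> ip; rewrite lt0e measure_ge0 andbT; apply/negP => /eqP m0.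
  suff : \int[mu]_x `|(EFin \o bump c r) x| = 0 by move=> h; rewrite h ltxx in ip.
  apply/(ae_eq_integral_abs mu measurableT mb).
  exists (ball c r); split => // x /= /not_implyP [_ hx].
  rewrite ball_bump /=; rewrite lt_neqAle bump_ge0 andbT eq_sym.
  by apply/eqP => h; apply: hx; rewrite h.
- move=> mp; rewrite lt0e integral_ge0 // andbT; apply/negP => /eqP i0.
  have [N [mN N0 hN]] := (ae_eq_integral_abs mu measurableT mb).1 i0.
  have : mu (ball c r) <= mu N.
    apply: le_measure; rewrite ?inE //.
    move=> x bx; apply: hN => /= h; move: bx; rewrite ball_bump /= => bx.
    by have := h I; case => e; rewrite e ltxx in bx.
  by rewrite N0 leNgt mp.
Qed.

Lemma int_fin (mu : probX X) (f : X -> R) : compact [set: X] -> continuous f ->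
  \int[mu]_x (f x)%:E = (fine (\int[mu]_x (f x)%:E))%:E.
Proof.
move=> cX cf; rewrite fineK //.
exact: (integrable_fin_num measurableT (cont_int mu cX cf)).
Qed.

Lemma wopen_pos (f : X -> R) : compact [set: X] -> continuous f ->
  weak_open [set nu : probX X | 0 < \int[nu]_x (f x)%:E].
Proof.
move=> cX cf mu /= hmu.
exists 1%N, (fun _ => f), (fine (\int[mu]_x (f x)%:E)); split => //.
- by rewrite -lte_fin -int_fin.
- move=> nu /(_ ord0); rewrite /= (int_fin mu) // (int_fin nu) //.
  rewrite (int_fin mu) // lte_fin in hmu.
  rewrite -EFinB /= lte_fin ltr_norml => /andP[h1 h2].
  rewrite lte_fin; lra.
Qed.

Lemma net (n : nat) : compact [set: X] ->
  exists s : seq X, forall x, exists2 c, c \in s & (mdist c x < n.+1%:R^-1)%R.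
Proof.
rewrite compact_cover => cX.
have := cX X [set: X] (fun c => ball c n.+1%:R^-1).
case.
- by move=> c _; exact: ball_open'.
- move=> x _; exists x => //; apply: ballxx; by rewrite invr_gt0 ltr0n.
move=> D' _ cov; exists (finmap.enum_fset D') => x.
have [c Dc bc] := cov x I.
by exists c; [exact: Dc | move: bc; rewrite ballEmdist].
Qed.
End S.

Theorem theorem13 (R : realType) (X : pmetricType R) (F : X -> set X) :
  compact [set: X] -> set_valued_mapping F ->
  let M := [set mu : probX X | F_invariant F mu] in
  let A := [set mu : probX X | F_invariant F mu /\ full_support mu] in
  A = set0 \/ (Gdelta_in M A /\ dense_in M A).
Proof.
move=> cX sF M A.
case: (pselect (exists mu, A mu)) => [[mu0 Amu0]|nA]; last first.
  by left; apply/seteqP; split => // mu Amu; apply: nA; exists mu.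
right; split.
- have [s hs] := @choice nat (seq X) (fun n s => forall x, exists2 c, c \in s & (mdist c x < n.+1%:R^-1)%R) (fun n => net n cX).
  pose cen k := if @unpickle (nat * nat)%type k is Some (n, i) then nth point (s n) i else point.
  pose rad k := if @unpickle (nat * nat)%type k is Some (n, i) then (n.+1%:R^-1 : R) else 1.
  have rad0 k : (0 < rad k)%R.
    by rewrite /rad; case: unpickle => [[n i]|] //=; rewrite invr_gt0 ltr0n.
  pose U k := [set nu : probX X | (0 < \int[nu]_x (bump (cen k) (rad k) x)%:E)%E].
  exists U; split.
    by move=> k; apply: wopen_pos cX (@bump_cont _ _ _ _).
  apply/seteqP; split.
    move=> mu [iM fs]; split => // k _; rewrite /U /=; apply/int_bump; apply: fs.
      exact: ball_open'.
    by exists (cen k); apply: ballxx.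
  move=> mu [iM hU]; split => // V oV [x Vx].
  have : nbhs x V by move: oV; rewrite openE; apply.
  move=> /nbhs_ballP [eps /= eps0 bV].
  pose n := Num.truncn (2 / eps).
  pose r : R := n.+1%:R^-1.
  have r2 : (2 * r < eps)%R.
    have h := Num.Theory.truncnS_gt (2 / eps); rewrite -/n in h.
    rewrite ltr_pdivrMr // in h.
    by rewrite /r ltr_pdivrMr ?ltr0n // mulrC.
  have [c cs dc] := hs n x.
  have := hU (pickle (n, index c (s n))) I.
  rewrite /U /cen /rad /= pickleK nth_index // -/r => /int_bump pos.
  apply: (lt_le_trans pos); apply: le_measure; rewrite ?inE.
  - by apply: open_mes; exact: ball_open'.
  - exact: open_mes.
  move=> y; rewrite ballEmdist /= => hy; apply: bV; rewrite ballEmdist /=.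
  have := metric_triangle x c y; have := metric_sym x c.
  move: dc; rewrite -/r => dc; lra.
- split => [mu [] //|V wV [nu [Vnu Mnu]]].
  have [n [f [e [e0 cf sub]]]] := wV nu Vnu.
  pose a i := fine (\int[nu]_x (f i x)%:E).
  pose b i := fine (\int[mu0]_x (f i x)%:E).
  pose K : R := (\sum_(i < n) `|b i - a i| + 1)%R.
  have K0 : (0 < K)%R by rewrite /K ltr_wpDl // sumr_ge0.
  pose t : R := (e / (K + e))%R.
  have Ke0 : (0 < K + e)%R by rewrite addr_gt0.
  have t0 : (0 < t)%R by rewrite divr_gt0.
  have t1 : (t <= 1)%R by rewrite ler_pdivrMr // mul1r lerDr ltW.
  exists (mixp (ltW t0) t1 nu mu0); split; last first.
    split; first exact: (mix_inv _ _ Mnu Amu0.1).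
    by apply: mix_full => //; case: Amu0.
  apply: sub => i /=.
  rewrite mix_int // -/(a i) -/(b i) [X in (_ - X)%E](int_fin nu cX (cf i)) -/(a i).
  rewrite -EFinB lte_fin.
  have hi : (`|b i - a i| <= K - 1)%R.
    by rewrite /K addrK (bigD1 i) //= lerDl sumr_ge0.
  have -> : ((1 - t) * a i + t * b i - a i = t * (b i - a i))%R by ring.
  rewrite normrM (gtr0_norm t0).
  apply: (le_lt_trans (ler_wpM2l (ltW t0) hi)).
  have : (t * (K + e) = e)%R by rewrite /t mulrVK ?unitfE ?gt_eqF.
  move=> h; nra.
Qed.
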